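(* Let $X$ be a finite connected $s$-regular graph with vertex set $X^0$, edge set $X^1$, and let $\lambda_2$ be the second largest eigenvalue of its adjacency matrix. Let $0<\alpha\le 1$ and let $E\subset X^1$ with $|E|\le\alpha|X^1|$. Let $\Gamma(E)\subset X^0$ be the set of vertices incident to some edge of $E$. Then $|\Gamma(E)|\ge\beta|E|$, where $$\beta=\frac{\sqrt{\lambda_2^2+4s(s-\lambda_2)\alpha}-\lambda_2}{s(s-\lambda_2)\alpha}.$$ *)

(* Defs.v *)
From HB Require Import structures.
From mathcomp Require Import all_boot all_order all_algebra.
Set Implicit Arguments. Unset Strict Implicit. Unset Printing Implicit Defensive.
Import Order.TTheory GRing.Theory Num.Theory.
Local Open Scope ring_scope.

Definition simple_graph n (e : rel 'I_n) : Prop :=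
  symmetric e /\ irreflexive e.

Definition regular n (e : rel 'I_n) (s : nat) : Prop :=
  forall x : 'I_n, #|[set y | e x y]| = s.

Definition connected_graph n (e : rel 'I_n) : Prop :=
  forall x y : 'I_n, connect e x y.

Definition edges n (e : rel 'I_n) : {set {set 'I_n}} :=
  [set [set x; y] | x in 'I_n, y in 'I_n & e x y].

Definition adjacency (R : nzRingType) n (e : rel 'I_n) : 'M[R]_n :=
  \matrix_(i, j) (e i j)%:R.

(* l2 is the second largest eigenvalue of A (eigenvalues counted with
   multiplicity): the characteristic polynomial of A factors as
   prod_(x <- r) ('X - x) with r sorted non-increasingly, and l2 = r_1. *)
Definition second_largest_eigenvalue (R : rcfType) n (A : 'M[R]_n) (l2 : R)
  : Prop :=
  exists r : seq R,
    [/\ sorted >=%R r, char_poly A = \prod_(x <- r) ('X - x%:P)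
      & l2 = r`_1].

Definition incident_vertices n (E : {set {set 'I_n}}) : {set 'I_n} :=
  [set v | [exists f in E, v \in f]].

(* Main.v *)
Require Import Defs.
From HB Require Import structures.
From mathcomp Require Import all_boot all_order all_algebra.
From mathcomp Require Import complex spectral sesquilinear.
From mathcomp Require Import ring lra.
Import Order.TTheory GRing.Theory Num.Theory.
Local Open Scope ring_scope.
Local Open Scope sesquilinear_scope.

Lemma char_poly_conjV (F : fieldType) n (P M : 'M[F]_n) : P \in unitmx ->
  char_poly (invmx P *m M *m P) = char_poly M.
Proof.
move=> Pu; rewrite /char_poly /char_poly_mx.
have -> : 'X%:M - map_mx polyC (invmx P *m M *m P) =
   map_mx polyC (invmx P) *m ('X%:M - map_mx polyC M) *m map_mx polyC P.
  rewrite mulmxBr mulmxBl !map_mxM; congr (_ - _).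
  rewrite mul_mx_scalar -scalemxAl -map_mxM mulVmx // map_mx1 scalemx1.
  by [].
rewrite !det_mulmx !det_map_mx mulrC mulrA -rmorphM -det_mulmx mulmxV //.
by rewrite det1 rmorph1 mul1r.
Qed.

Lemma spec_setup (R : rcfType) n (A : 'M[R]_n) :
  A^T = A ->
  let f := real_complex R in
  let Ac := map_mx f A in
  exists P : 'M[R[i]]_n, exists d : 'I_n -> R,
   [/\ P *m P^t* = 1%:M, P^t* *m P = 1%:M,
       Ac = P^t* *m diag_mx (\row_i f (d i)) *m P &
       char_poly A = \prod_(i < n) ('X - (d i)%:P)].
Proof.
move=> Asym f Ac.
have Acs : Ac^t* = Ac.
  apply/matrixP => i j; rewrite !mxE -[in RHS]Asym mxE.
  by apply/CrealP/complex_realP; exists (A j i).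
have Anorm : Ac \is normalmx by apply/normalmxP; rewrite Acs.
set P := spectralmx Ac; set D := spectral_diag Ac.
have Pu : P \is unitarymx by apply: spectral_unitarymx.
have PP : P *m P^t* = 1%:M by apply/unitarymxP.
have iP : invmx P = P^t* by apply: invmx_unitary.
have PtP : P^t* *m P = 1%:M by rewrite -iP mulVmx // spectral_unit.
have EA : Ac = P^t* *m diag_mx D *m P by rewrite -iP; apply/orthomx_spectralP.
have cpA : char_poly Ac = \prod_(i < n) ('X - (D 0 i)%:P).
  rewrite EA -iP char_poly_conjV ?spectral_unit // char_poly_trig ?diag_mx_is_trig //.
  by apply: eq_bigr => i _; rewrite mxE eqxx mulr1n.
have Dreal : forall i, D 0 i = f (complex.Re (D 0 i)).
  move=> i; have : D \is a realmx.
    by apply: hermitian_spectral_diag_real; apply/is_hermitianmxP; rewrite expr0 scale1r Acs.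
  move=> /mxOverP /(_ 0 i) /complex_realP [k ->] /=; by [].
exists P, (fun i => complex.Re (D 0 i)); split => //.
  by rewrite EA; congr (_ *m _ *m _); congr diag_mx; apply/rowP => i; rewrite mxE -Dreal.
apply: (@map_poly_inj _ _ f).
rewrite map_char_poly -/Ac cpA rmorph_prod; apply: eq_bigr => i _.
by rewrite rmorphB /= map_polyX map_polyC /= {1}Dreal.
Qed.


Lemma conj_real_complex (R : rcfType) (x : R) : ((x%:C)%C : R[i])^* = (x%:C)%C.
Proof. by apply/CrealP/complex_realP; exists x. Qed.

Lemma gersh (R : rcfType) n (A : 'M[R]_n) s (P : 'M[R[i]]_n) (d : 'I_n -> R) i :
  (forall i j, 0 <= A i j) -> (forall j, \sum_i A i j = s) ->
  P *m P^t* = 1%:M ->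
  map_mx (real_complex R) A = P^t* *m diag_mx (\row_i (d i)%:C%C) *m P ->
  d i <= s.
Proof.
move=> A0 As PP EA.
set Ac := map_mx _ A in EA.
have PA : P *m Ac = diag_mx (\row_i (d i)%:C%C) *m P by rewrite EA !mulmxA PP mul1mx.
have uA : forall k, (d i)%:C%C * P i k = \sum_m P i m * (A m k)%:C%C.
  move=> k; have /matrixP/(_ i k) := PA.
  by rewrite mul_diag_mx !mxE => <-; apply: eq_bigr => m _; rewrite mxE.
set nu := fun k => `|P i k|.
have nuR : forall k, nu k \is Num.real by move=> k; apply: normr_real.
case: (real_arg_maxP (F:=nu) (P:=xpredT) (i0:=i)) => // [k _] kmax.
have : exists k0, P i k0 != 0.
  apply/existsP; apply: contraT; rewrite negb_exists => /forallP all0.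
  have /matrixP/(_ i i) := PP; rewrite !mxE eqxx big1 ?mulr1n.
    by move=> /eqP; rewrite eq_sym oner_eq0.
  by move=> m _; move: (all0 m); rewrite negbK => /eqP ->; rewrite mul0r.
case=> k0 Pk0.
have nupos : 0 < nu k.
  by apply: lt_le_trans (kmax k0 isT); rewrite /nu normr_gt0.
have H1 : `|(d i)%:C%C| * nu k <= (s%:C)%C * nu k.
  rewrite /nu -normrM uA; apply: le_trans (ler_norm_sum _ _ _) _.
  rewrite -(As k) rmorph_sum /= mulr_suml; apply: ler_sum => m _.
  rewrite normrM [`|(A m k)%:C%C|]ger0_norm ?ler0c // mulrC; apply: ler_wpM2l; first by rewrite ler0c.
  exact: (kmax m isT).
have H2 : `|(d i)%:C%C| <= (s%:C)%C by rewrite -(ler_pM2r nupos).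
rewrite -lecR; apply: le_trans H2; apply: real_ler_norm.
by apply/complex_realP; exists (d i).
Qed.

Lemma dot_conj (C : numClosedFieldType) n (u v : 'rV[C]_n) :
  (u *m v^t*) 0 0 = \sum_i u 0 i * (v 0 i)^*.
Proof. by rewrite !mxE; apply: eq_bigr => i _; rewrite !mxE. Qed.

Lemma quad_diag (C : numClosedFieldType) n (v D : 'rV[C]_n) :
  (v *m diag_mx D *m v^t*) 0 0 = \sum_i D 0 i * (v 0 i * (v 0 i)^*).
Proof.
rewrite mul_mx_diag !mxE; apply: eq_bigr => i _; rewrite !mxE.
by rewrite mulrAC mulrC.
Qed.

Lemma tc_real (R : rcfType) m p (M : 'M[R]_(m, p)) :
  (map_mx (real_complex R) M)^t* = map_mx (real_complex R) M^T.
Proof. by apply/matrixP => i j; rewrite !mxE conj_real_complex. Qed.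

Lemma sqnorm_real (R : rcfType) (z : R[i]) :
  z * z^* = ((complex.Re z ^+ 2 + complex.Im z ^+ 2)%:C)%C.
Proof. by rewrite add_Re2_Im2 normCK. Qed.

Lemma count_enum_card n (p : pred 'I_n) : count p (enum 'I_n) = #|p|.
Proof.
rewrite cardE -size_filter /enum_mem -filter_predI.
by congr size; apply: eq_filter => y /=; rewrite andbT.
Qed.

Lemma spectral_bound (R : rcfType) n (A : 'M[R]_n) (s l2 : R) (r : seq R)
  (x : 'rV[R]_n) :
  A^T = A -> (forall i j, 0 <= A i j) -> (forall j, \sum_i A i j = s) ->
  sorted >=%R r -> char_poly A = \prod_(y <- r) ('X - y%:P) -> l2 = r`_1 ->
  (1 < n)%N ->
  l2 <= s /\ (x *m A *m x^T) 0 0 <=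
    l2 * (x *m x^T) 0 0 + (s - l2) * (\sum_i x 0 i) ^+ 2 / n%:R.
Proof.
move=> Asym A0 As srt cpr l2E n2.
have [P [d [PP PtP EA cp]]] := @spec_setup R n A Asym.
have dle : forall i, d i <= s by move=> i; exact: (@gersh R n A s P d i A0 As PP EA).
have pr : perm_eq r [seq d i | i <- enum 'I_n].
  by apply: prod_XsubC_eq; rewrite -cpr cp big_map big_enum.
have szr : size r = n.
  by have := size_char_poly A; rewrite cpr size_prod_XsubC; case.
have l2in : l2 \in r by rewrite l2E mem_nth // szr.
have [i2 l2d] : exists i2, l2 = d i2.
  by move: l2in; rewrite (perm_mem pr) => /mapP [i2 _ ->]; exists i2.
have l2s : l2 <= s by rewrite l2d.
split => //.
have cnt : (count (fun y : R => (l2 < y)%R) r <= 1)%N.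
  have ge_tr : transitive (>=%R : rel R) by move=> a b c h1 h2; exact: le_trans h2 h1.
  clear -srt l2E ge_tr; move: srt l2E; case: r => [|a [|b t]] /=; [by []|by move=> _ _; rewrite addn0; case: (l2 < a)%R|].
  move=> /andP [_ pt] ->.
  rewrite ltxx add0n.
  have /allP tb := order_path_min ge_tr pt.
  suff -> : count (fun y : R => (b < y)%R) t = 0%N by case: (b < a).
  apply/eqP; rewrite -leqn0 leqNgt -has_count; apply/hasPn => y /tb.
  by rewrite /= leNgt.
have uniqj : forall i j, l2 < d i -> l2 < d j -> i = j.
  move: cnt; rewrite (permP pr) count_map count_enum_card.
  by move=> /card_le1_eqP H i j hi hj; apply: H.
set xc := map_mx (real_complex R) x.
set z := xc *m P^t*.
set one := const_mx 1 : 'rV[R[i]]_n.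
set w := one *m P^t*.
set D := \row_i (d i)%:C%C : 'rV[R[i]]_n.
have tcM : forall m p q (M : 'M[R[i]]_(m, p)) (N : 'M[R[i]]_(p, q)),
    (M *m N)^t* = N^t* *m M^t* by move=> m p q M N; rewrite trmx_mul map_mxM.
have zt : P *m xc^t* = z^t* by rewrite /z tcM trmxCK.
set zeta := fun i => complex.Re (z 0 i) ^+ 2 + complex.Im (z 0 i) ^+ 2.
have zeta0 : forall i, 0 <= zeta i by move=> i; rewrite addr_ge0 ?sqr_ge0.
have zz : forall i, z 0 i * (z 0 i)^* = (zeta i)%:C%C by move=> i; rewrite sqnorm_real.
have E1 : (x *m A *m x^T) 0 0 = \sum_i d i * zeta i.
  apply: (fmorph_inj (real_complex R)); rewrite rmorph_sum /=.
  have -> : ((x *m A *m x^T) 0 0)%:C%C =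
     (xc *m (P^t* *m diag_mx (\row_i (d i)%:C%C) *m P) *m xc^t*) 0 0.
    by rewrite -EA tc_real -!map_mxM [in RHS]mxE.
  rewrite !mulmxA -/z -mulmxA zt quad_diag.
  by apply: eq_bigr => i _; rewrite zz mxE rmorphM.
have E2 : (x *m x^T) 0 0 = \sum_i zeta i.
  apply: (fmorph_inj (real_complex R)); rewrite rmorph_sum /=.
  have -> : ((x *m x^T) 0 0)%:C%C = (xc *m xc^t*) 0 0.
    by rewrite tc_real -!map_mxM [in RHS]mxE.
  have -> : xc *m xc^t* = z *m z^t*.
    by rewrite -zt /z -mulmxA (mulmxA _ P) PtP mul1mx.
  by rewrite dot_conj; apply: eq_bigr => i _; rewrite zz.
have oneA : one *m map_mx (real_complex R) A = (s%:C)%C *: one.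
  apply/rowP => j; rewrite !mxE -(As j) rmorph_sum /= mulr1.
  by apply: eq_bigr => k _; rewrite !mxE mul1r.
have E3 : forall i, w 0 i * (d i)%:C%C = (s%:C)%C * w 0 i.
  move=> i.
  have : w *m diag_mx (\row_i (d i)%:C%C) = (s%:C)%C *: w.
    rewrite /w -[LHS]mulmx1 -PP !mulmxA -(mulmxA one) -(mulmxA one) -EA oneA.
    by rewrite scalemxAl.
  by move=> /rowP /(_ i); rewrite mul_mx_diag !mxE.
have E4 : ((\sum_i x 0 i)%:C)%C = \sum_i z 0 i * (w 0 i)^*.
  rewrite -dot_conj /w tcM trmxCK /z mulmxA -(mulmxA xc) PtP mulmx1 dot_conj.
  rewrite rmorph_sum; apply: eq_bigr => i _.
  by rewrite !mxE conj_real_complex mulr1.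
have E5 : (n%:R : R[i]) = \sum_i w 0 i * (w 0 i)^*.
  rewrite -dot_conj /w tcM trmxCK mulmxA -(mulmxA one) PtP mulmx1 dot_conj.
  rewrite -[n in LHS]card_ord -sumr_const; apply: eq_bigr => i _.
  by rewrite !mxE -(rmorph1 (real_complex R)) conj_real_complex mulr1.
rewrite E1 E2.
have n0 : (0 < n%:R :> R) by rewrite ltr0n; apply: leq_trans n2.
case: (boolP [exists j, l2 < d j]) => [/existsP [j hj]|none]; last first.
  have dl : forall i, d i <= l2.
    by move=> i; rewrite leNgt; apply: contra none => h; apply/existsP; exists i.
  apply: le_trans (_ : l2 * \sum_i zeta i <= _); last first.
    rewrite lerDl; apply: divr_ge0; last exact: ltW.
    by rewrite mulr_ge0 ?subr_ge0 ?sqr_ge0.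
  rewrite mulr_sumr; apply: ler_sum => i _; exact: ler_wpM2r.
have [i wi] : exists i, w 0 i != 0.
  apply/existsP; apply: contraT; rewrite negb_exists => /forallP all0.
  move: E5; rewrite big1; last by move=> k _; move: (all0 k); rewrite negbK => /eqP ->; rewrite mul0r.
  by move=> /eqP; rewrite pnatr_eq0 => /eqP n0'; move: n2; rewrite n0'.
have dis : forall k, w 0 k != 0 -> d k = s.
  move=> k wk; apply: (fmorph_inj (real_complex R)); apply: (mulfI wk).
  by rewrite E3 mulrC.
have ij : i = j by apply: uniqj => //; rewrite dis //; apply: lt_le_trans hj (dle j).
subst i.
have djs : d j = s by apply: dis.
have w0 : forall k, k != j -> w 0 k = 0.
  move=> k kj; apply/eqP; apply: contraNT kj => wk; apply/eqP.
  by apply: uniqj => //; rewrite dis // -djs.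
have dkl : forall k, k != j -> d k <= l2.
  move=> k kj; rewrite leNgt; apply: contra kj => h; apply/eqP; exact: uniqj.
have S1 : ((\sum_i x 0 i)%:C)%C = z 0 j * (w 0 j)^*.
  rewrite E4 (bigD1 j) //= big1 ?addr0 // => k kj.
  by rewrite w0 // conjC0 mulr0.
have N1 : (n%:R : R[i]) = w 0 j * (w 0 j)^* by rewrite E5 (bigD1 j) //= big1 ?addr0 // => k kj; rewrite w0 // mul0r.
have Zj : zeta j = (\sum_i x 0 i) ^+ 2 / n%:R.
  apply: (canRL (mulfK _)); first by rewrite gt_eqF.
  apply: (fmorph_inj (real_complex R)).
  rewrite rmorphM /= -zz rmorphXn /= expr2 rmorph_nat N1.
  rewrite -{2}(@conj_real_complex R (\sum_i x 0 i)) S1 rmorphM /= conjCK.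
  ring.
rewrite -mulrA -Zj (bigD1 j) //= [in X in _ <= X](bigD1 j) //= djs.
have H : \sum_(i < n | i != j) d i * zeta i <= l2 * \sum_(i < n | i != j) zeta i.
  by rewrite mulr_sumr; apply: ler_sum => i ij; apply: ler_wpM2r => //; apply: dkl.
move: H; set X := \sum_(i < n | i != j) d i * zeta i.
set Y := \sum_(i < n | i != j) zeta i; move=> H.
have -> : l2 * (zeta j + Y) + (s - l2) * zeta j = s * zeta j + l2 * Y by ring.
by rewrite lerD2l.
Qed.

Local Close Scope sesquilinear_scope.
Lemma fin (R : rcfType) (c l2 sq m k : R) : 0 < c -> 0 < m -> 0 <= k -> 0 <= sq ->
  sq ^+ 2 = l2 ^+ 2 + 4 * c -> 4 * m ^+ 2 <= 2 * m * l2 * k + c * k ^+ 2 ->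
  (sq - l2) * m <= c * k.
Proof.
move=> c0 m0 k0 sq0 sqE H.
have u2 : (sq * m) ^+ 2 <= (c * k + l2 * m) ^+ 2.
  have : c * (4 * m ^+ 2) <= c * (2 * m * l2 * k + c * k ^+ 2) by rewrite ler_pM2l.
  have -> : (sq * m) ^+ 2 = l2^+2 * m^+2 + c * (4 * m ^+ 2) by rewrite exprMn sqE; ring.
  move=> h; have -> : (c * k + l2 * m) ^+ 2 = l2^+2 * m^+2 + c * (2 * m * l2 * k + c * k ^+ 2) by ring.
  by rewrite lerD2l.
have sql : `|l2| < sq.
  rewrite -(ltr_pXn2r (n:=2)) // ?nnegrE // real_normK ?num_real //; lra.
have ul : - (sq * m) < c * k + l2 * m.
  have : - `|l2| <= l2 by rewrite lerNl -normrN ler_norm.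
  nra.
have -> : (sq - l2) * m = sq * m - l2 * m by ring.
rewrite lerBlDr.
move: u2 ul; set a := sq * m; set u := c * k + l2 * m => u2 ul.
rewrite leNgt; apply/negP => h.
have : 0 < (a - u) * (a + u) by apply: mulr_gt0; lra.
have -> : (a - u) * (a + u) = a ^+ 2 - u ^+ 2 by ring.
by rewrite subr_gt0 ltNge u2.
Qed.

Lemma card_pairs n (Q : 'I_n -> 'I_n -> bool) :
  #|[set p : 'I_n * 'I_n | Q p.1 p.2]| = (\sum_i \sum_j (Q i j : nat))%N.
Proof.
rewrite -sum1_card pair_big /= big_mkcond /=.
by apply: eq_bigr => p _; rewrite inE; case: (Q _ _).
Qed.

Lemma set2_inj n (a b c d : 'I_n) : (a < b)%N -> (c < d)%N ->
  [set a; b] = [set c; d] -> a = c /\ b = d.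
Proof.
move=> ab cd E.
have ha : a \in [set c; d] by rewrite -E !inE eqxx.
have hb : b \in [set c; d] by rewrite -E !inE eqxx orbT.
have hc : c \in [set a; b] by rewrite E !inE eqxx.
move: ha hb hc; rewrite !inE => /orP [] /eqP ha /orP [] /eqP hb /orP [] /eqP hc;
  subst; try by [].
all: try (by move: ab; rewrite ltnn).
all: try (by move: (ltn_trans ab cd); rewrite ltnn).
all: try (by move: cd; rewrite ltnn).
Qed.

Lemma two_edges n (e : rel 'I_n) (E : {set {set 'I_n}}) :
  simple_graph e -> E \subset edges e ->
  (2 * #|E| <= #|[set p : 'I_n * 'I_n | e p.1 p.2 &&
      (p.1 \in incident_vertices E) && (p.2 \in incident_vertices E)]|)%N.
Proof.
move=> [esym eirr] sub.
set L := [set p : 'I_n * 'I_n | (p.1 < p.2)%N && e p.1 p.2 && ([set p.1; p.2] \in E)].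
set G := [set p : 'I_n * 'I_n | (p.2 < p.1)%N && e p.1 p.2 && ([set p.1; p.2] \in E)].
have cardL : #|L| = #|E|.
  have -> : E = (fun p : 'I_n * 'I_n => [set p.1; p.2]) @: L.
    apply/setP => f; apply/idP/imsetP.
    - move=> fE; have := subsetP sub f fE; rewrite /edges.
      case/imset2P => a b _; rewrite inE /= => eab fab; subst f.
      case: (ltngtP a b) => [ab|ba|ab].
      + by exists (a, b); rewrite // inE /= ab eab fE.
      + exists (b, a); last by rewrite /= setUC.
        by rewrite inE /= ba esym eab setUC fE.
      + by move: eab; rewrite (val_inj ab) eirr.
    - by case=> p; rewrite inE => /andP [_ h] ->.
  rewrite card_in_imset // => [[a b] [c d]]; rewrite !inE /=.
  move=> /andP [/andP [ab _] _] /andP [/andP [cd _] _] /= h.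
  by have [-> ->] := @set2_inj n a b c d ab cd h.
have cardG : #|G| = #|L|.
  have -> : G = (fun p : 'I_n * 'I_n => (p.2, p.1)) @: L.
    apply/setP => [[a b]]; apply/idP/imsetP.
    - rewrite inE /= => /andP [/andP [ba eab] h].
      exists (b, a) => //; by rewrite inE /= ba -esym eab setUC h.
    - case=> [[c d]]; rewrite inE /= => /andP [/andP [cd ecd] h] [-> ->].
      by rewrite inE /= cd -esym ecd setUC h.
  by rewrite card_imset // => [[a b] [c d]] [-> ->].
have LG : L :&: G = set0.
  apply/setP => [[a b]]; rewrite !inE /=.
  by case: (ltngtP a b); rewrite ?andbF.
have := cardsUI L G; rewrite LG cards0 addn0 cardG cardL addnn -mul2n => <-.
apply: subset_leq_card; apply/subsetP => [[a b]]; rewrite !inE /=.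
have inc : forall u v, e u v -> [set u; v] \in E ->
    [exists f in E, u \in f] && [exists f in E, v \in f].
  move=> u v _ h; apply/andP; split; apply/existsP;
    exists [set u; v]; by rewrite h !inE eqxx ?orbT.
case/orP => /andP [/andP [_ eab] h]; rewrite eab /=.
  exact: inc.
by rewrite andbC; apply: inc; rewrite 1?esym // setUC.
Qed.

Theorem mainTheorem6 (R : rcfType) (n : nat) (e : rel 'I_n) (s : nat)
  (l2 alpha : R) (E : {set {set 'I_n}}) :
  simple_graph e -> regular e s -> connected_graph e ->
  second_largest_eigenvalue (adjacency R e) l2 ->
  0 < alpha -> alpha <= 1 ->
  E \subset edges e ->
  (#|E|%:R <= alpha * #|edges e|%:R) ->
  let beta := (Num.sqrt (l2 ^+ 2 + 4 * s%:R * (s%:R - l2) * alpha) - l2)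
              / (s%:R * (s%:R - l2) * alpha) in
  beta * #|E|%:R <= #|incident_vertices E|%:R.
Proof.
move=> sg reg _ [r [srt cpr l2E]] a0 a1 sub Ebound; cbv zeta.
have [esym eirr] := sg.
case: (posnP #|E|) => [m0|mpos].
  by rewrite m0 mulr0 ler0n.
have n2 : (1 < n)%N.
  move: mpos; rewrite card_gt0 => /set0Pn [f fE].
  have := subsetP sub f fE; case/imset2P => a b _; rewrite inE /= => eab _.
  rewrite ltnNge; apply/negP => hn.
  have ha : (a < 1)%N := leq_trans (ltn_ord a) hn.
  have hb : (b < 1)%N := leq_trans (ltn_ord b) hn.
  have ab : a = b.
    by apply: val_inj => /=; move: ha hb; rewrite !ltnS !leqn0 => /eqP -> /eqP ->.
  by move: eab; rewrite ab eirr.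
set A := adjacency R e.
have degs : forall i, (\sum_j (e i j : nat))%N = s.
  move=> i; rewrite -(reg i) -sum1_card [RHS]big_mkcond /=.
  by apply: eq_bigr => j _; rewrite inE; case: (e i j).
have Asym : A^T = A by apply/matrixP => i j; rewrite !mxE esym.
have A0 : forall i j, 0 <= A i j by move=> i j; rewrite mxE ler0n.
have As : forall j, \sum_i A i j = s%:R.
  move=> j; rewrite -(degs j) natr_sum; apply: eq_bigr => i _.
  by rewrite mxE esym.
set G := incident_vertices E.
set x := \row_i ((i \in G) : nat)%:R : 'rV[R]_n.
have [l2s H] := @spectral_bound R n A s%:R l2 r x Asym A0 As srt cpr l2E n2.
have sx : \sum_i x 0 i = #|G|%:R.
  rewrite -sum1_card natr_sum [RHS]big_mkcond /=; apply: eq_bigr => i _.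
  by rewrite mxE; case: (i \in G).
have xx : (x *m x^T) 0 0 = #|G|%:R.
  rewrite -sx mxE; apply: eq_bigr => i _; rewrite !mxE.
  by case: (i \in G); rewrite ?mulr1 ?mulr0.
set Q := [set p : 'I_n * 'I_n | e p.1 p.2 && (p.1 \in G) && (p.2 \in G)].
have xAx : (x *m A *m x^T) 0 0 = #|Q|%:R.
  rewrite /Q (@card_pairs n (fun i j => e i j && (i \in G) && (j \in G))) natr_sum mxE.
  rewrite (eq_bigr (fun j => \sum_i x 0 i * A i j * x 0 j)); last first.
    by move=> j _; rewrite !mxE mulr_suml; apply: eq_bigr => i _; rewrite mxE.
  rewrite exchange_big /=; apply: eq_bigr => i _; rewrite natr_sum.
  apply: eq_bigr => j _; rewrite !mxE.
  by case: (i \in G); case: (j \in G); case: (e i j); rewrite /= ?mulr1 ?mulr0 ?mul0r ?mul1r.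
have h2m : (2 * #|E|)%:R <= (x *m A *m x^T) 0 0.
  by rewrite xAx ler_nat; apply: (@two_edges n e E sg sub).
have hN : (2 * #|edges e| <= s * n)%N.
  apply: leq_trans (@two_edges n e (edges e) sg (subxx _)) _.
  apply: leq_trans (_ : #|[set p : 'I_n * 'I_n | e p.1 p.2]| <= _)%N.
    apply: subset_leq_card; apply/subsetP => p; rewrite !inE.
    by case/andP => /andP [].
  rewrite (@card_pairs n e) (eq_bigr (fun _ => s)); last by move=> i _; apply: degs.
  by rewrite sum_nat_const card_ord mulnC.
rewrite xx sx in H.
have Hm := le_trans h2m H.
move: hN; rewrite -(ler_nat R) !natrM => hN.
move: Hm; rewrite natrM => Hm.
move: Ebound l2s Hm hN.
set M := #|E|%:R; set K := #|G|%:R; set Nn := n%:R; set NE := #|edges e|%:R.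
set S := s%:R => Ebound l2s Hm hN.
have M0 : 0 < M by rewrite ltr0n.
have K0 : 0 <= K by rewrite ler0n.
have Nn0 : 0 < Nn by rewrite ltr0n; apply: leq_trans n2.
have S0 : 0 <= S by rewrite ler0n.
have -> : 4 * S * (S - l2) * alpha = 4 * (S * (S - l2) * alpha) by ring.
set c := S * (S - l2) * alpha.
have c0 : 0 <= c by rewrite /c !mulr_ge0 ?subr_ge0 // ltW.
case: (eqVneq c 0) => [->|cn0].
  by rewrite invr0 mulr0 mul0r.
have cp : 0 < c by rewrite lt_def cn0.
set q := (S - l2) * K ^+ 2 / Nn in Hm.
have q0 : 0 <= q by rewrite /q divr_ge0 ?mulr_ge0 ?subr_ge0 ?sqr_ge0 // ltW.
have qN : q * Nn = (S - l2) * K ^+ 2 by rewrite /q divfK // gt_eqF.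
have hM : 2 * M <= alpha * S * Nn.
  have : alpha * (2 * NE) <= alpha * (S * Nn).
    by rewrite ler_pM2l.
  move=> h; nra.
have h1 : 2 * M * (2 * M) <= 2 * M * (l2 * K + q) by rewrite ler_pM2l ?mulr_gt0.
have h2 : 2 * M * q <= alpha * S * Nn * q by exact: (ler_wpM2r q0 hM).
have h3 : alpha * S * Nn * q = c * K ^+ 2.
  by rewrite -mulrA [Nn * q]mulrC qN /c; ring.
have key : 4 * M ^+ 2 <= 2 * M * l2 * K + c * K ^+ 2.
  have -> : 4 * M ^+ 2 = 2 * M * (2 * M) by ring.
  apply: le_trans h1 _; rewrite mulrDr mulrA lerD2l -h3; exact: h2.
have argp : 0 <= l2 ^+ 2 + 4 * c by apply: addr_ge0; [exact: sqr_ge0 | apply: mulr_ge0].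
have sqE := sqr_sqrtr argp.
rewrite mulrAC ler_pdivrMr // [K * c]mulrC.
by apply: fin => //; rewrite sqrtr_ge0.
Qed.
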